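(* For any $w, w' \in \mathcal{C}\langle A \rangle$ and $\bullet \in \{\ast, \mathrm{sh}\}$, \[ \iota(w \bullet_{\hbar} w')=\iota(w) \bullet \iota(w'), \] where $\bullet_\hbar$ denotes $\ast_\hbar$ if $\bullet=\ast$ and $\mathrm{sh}_\hbar$ if $\bullet=\mathrm{sh}$.
   Context: Let $\mathcal{C}=\mathbb{Q}[\hbar]$ ($\hbar$ formal), $\mathfrak{H}=\mathcal{C}\langle a,b\rangle$ the non-commutative polynomial ring. For $k\ge1$, $g_k=ba^k$. $A=\{\hbar b\}\cup\{ba^k\mid k\ge1\}$ (an algebraically independent set), $\mathcal{C}\langle A\rangle$ the $\mathcal{C}$-subalgebra generated by $1$ and $A$, $\mathfrak z$ the $\mathcal C$-span of $A$. Harmonic product: $\circ_\hbar$ symmetric $\mathcal C$-bilinear on $\mathfrak z$ with $(\hbar b)\circ_\hbar(\hbar b)=\hbar\cdot\hbar b$, $(\hbar b)\circ_\hbar g_k=\hbar g_k$, $g_k\circ_\hbar g_l=g_{k+l}$; $\ast_\hbar$ on $\mathcal{C}\langle A\rangle$: $w\ast_\hbar1=1\ast_\hbar w=w$, $(wu)\ast_\hbar(w'v)=(w\ast_\hbar w'v)u+(wu\ast_\hbar w')v+(w\ast_\hbar w')(u\circ_\hbar v)$ ($u,v\in A$). Shuffle product $\mathrm{sh}_\hbar$ on $\mathfrak H$: $\mathcal C$-bilinear with $w\,\mathrm{sh}_\hbar\,1=1\,\mathrm{sh}_\hbar\,w=w$, $wa\,\mathrm{sh}_\hbar\,w'a=(wa\,\mathrm{sh}_\hbar\,w'+w\,\mathrm{sh}_\hbar\,w'a+\hbar(w\,\mathrm{sh}_\hbar\,w'))a$,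 $wb\,\mathrm{sh}_\hbar\,w'=w\,\mathrm{sh}_\hbar\,w'b=(w\,\mathrm{sh}_\hbar\,w')b$; $\mathcal C\langle A\rangle$ is closed under it. Classical side: $\mathfrak h=\mathbb{Q}\langle x,y\rangle$, $z_k=yx^{k-1}$, $\mathfrak h^1=\mathbb Q+y\mathfrak h$ (the free algebra on $z_1,z_2,\dots$). Harmonic product $\ast$ on $\mathfrak h^1$: $w\ast1=1\ast w=w$, $(wz_k)\ast(w'z_l)=(w\ast w'z_l)z_k+(wz_k\ast w')z_l+(w\ast w')z_{k+l}$; shuffle product $\mathrm{sh}$ on $\mathfrak h$: $w\,\mathrm{sh}\,1=1\,\mathrm{sh}\,w=w$, $(wu)\,\mathrm{sh}\,(w'v)=(w\,\mathrm{sh}\,w'v)u+(wu\,\mathrm{sh}\,w')v$ ($u,v\in\{x,y\}$). $\iota:\mathcal C\langle A\rangle\to\mathfrak h^1$ is the unital $\mathbb Q$-algebra homomorphism (for concatenation) with $\iota(\hbar)=0$, $\iota(\hbar b)=0$ and $\iota(g_k)=z_k$ for $k\ge1$. *)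

(* Defs.v *)
(* with multinomials' monalg: {malg R[{fmonom L}]} is the
   free (non-commutative) R-algebra on the letters L (words = fmonom L). *)
From HB Require Import structures.
From mathcomp Require Import all_boot all_order all_algebra.
From mathcomp Require Import finmap.
From mathcomp.multinomials Require Import monalg.

Set Implicit Arguments.
Unset Strict Implicit.
Unset Printing Implicit Defensive.

Import GRing.Theory.
Local Open Scope ring_scope.

Definition CC := {poly rat}.
Definition hbar : CC := 'X.

Definition wordC (R : ringType) (L : choiceType) (s : seq L)
  : {malg R[{fmonom L}]} := << FMonom s >>.

Definition la := false.
Definition lb := true.
Definition lx := false.
Definition ly := true.

Definition HH := {malg CC[{fmonom bool}]}.
(* C<A>: since A is algebraically independent, C<A> is the free C-algebra on A.
   Letter 0 stands for hbar*b, letter k >= 1 for g_k = b a^k. *)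
Definition HA := {malg CC[{fmonom nat}]}.
(* frak h^1 = free Q-algebra on z_1, z_2, ...; letter i stands for z_(i+1). *)
Definition h1 := {malg rat[{fmonom nat}]}.
Definition hh := {malg rat[{fmonom bool}]}.

Definition embA_letter (i : nat) : HH :=
  if i == 0%N then hbar *: wordC CC [:: lb]
  else wordC CC (lb :: nseq i la).
Definition embA (p : HA) : HH :=
  \sum_(k <- msupp p) p@_k *: \prod_(i <- fmonom_val k) embA_letter i.

Definition emb1_letter (i : nat) : hh := wordC rat (ly :: nseq i lx).
Definition emb1 (p : h1) : hh :=
  \sum_(k <- msupp p) p@_k *: \prod_(i <- fmonom_val k) emb1_letter i.

(* iota : C<A> -> h^1, the unital Q-algebra hom with iota(hbar) = 0,
   iota(hbar b) = 0, iota(g_k) = z_k. *)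
Definition iota_letter (i : nat) : h1 :=
  if i == 0%N then 0 else wordC rat [:: i.-1].
Definition iotaA (p : HA) : h1 :=
  \sum_(k <- msupp p) (p@_k).[0] *: \prod_(i <- fmonom_val k) iota_letter i.

Definition bilin (R : comRingType) (L : choiceType)
    (f : seq L -> seq L -> {malg R[{fmonom L}]})
    (p q : {malg R[{fmonom L}]}) : {malg R[{fmonom L}]} :=
  \sum_(k1 <- msupp p) \sum_(k2 <- msupp q)
     (p@_k1 * q@_k2) *: f (fmonom_val k1) (fmonom_val k2).

(* u o_hbar v for u, v in A (letters): hbar b o hbar b = hbar (hbar b),
   hbar b o g_k = hbar g_k, g_k o g_l = g_(k+l). *)
Definition circ_h (u v : nat) : HA :=
  if (u == 0%N) || (v == 0%N) then hbar *: wordC CC [:: (u + v)%N]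
  else wordC CC [:: (u + v)%N].

(* Words are given reversed (head = last letter), to follow the
   right-end recursion  (wu)*(w'v) = (w*w'v)u + (wu*w')v + (w*w')(u o v). *)
Fixpoint harm_h_rev (s : seq nat) : seq nat -> HA :=
  match s with
  | [::] => fun t => wordC CC (rev t)
  | u :: s' => fix F (t : seq nat) : HA :=
      match t with
      | [::] => wordC CC (rev (u :: s'))
      | v :: t' => harm_h_rev s' t * wordC CC [:: u]
                   + F t' * wordC CC [:: v]
                   + harm_h_rev s' t' * circ_h u v
      end
  end.
Definition harm_h (p q : HA) : HA :=
  bilin (fun w w' => harm_h_rev (rev w) (rev w')) p q.

(* z_(u+1) z_(v+1) -> z_(u+v+2), i.e. letter u+v+1. *)
Fixpoint harm_rev (s : seq nat) : seq nat -> h1 :=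
  match s with
  | [::] => fun t => wordC rat (rev t)
  | u :: s' => fix F (t : seq nat) : h1 :=
      match t with
      | [::] => wordC rat (rev (u :: s'))
      | v :: t' => harm_rev s' t * wordC rat [:: u]
                   + F t' * wordC rat [:: v]
                   + harm_rev s' t' * wordC rat [:: (u + v).+1]
      end
  end.
Definition harm (p q : h1) : h1 :=
  bilin (fun w w' => harm_rev (rev w) (rev w')) p q.

(* wa sh w'a = (wa sh w' + w sh w'a + hbar (w sh w')) a,
   wb sh w' = w sh w'b = (w sh w') b. *)
Fixpoint sh_h_rev (s : seq bool) : seq bool -> HH :=
  match s with
  | [::] => fun t => wordC CC (rev t)
  | u :: s' => fix F (t : seq bool) : HH :=
      match t with
      | [::] => wordC CC (rev (u :: s'))
      | v :: t' =>
          if u == lb then sh_h_rev s' t * wordC CC [:: lb]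
          else if v == lb then F t' * wordC CC [:: lb]
          else (F t' + sh_h_rev s' t + hbar *: sh_h_rev s' t')
                 * wordC CC [:: la]
      end
  end.
Definition sh_h (p q : HH) : HH :=
  bilin (fun w w' => sh_h_rev (rev w) (rev w')) p q.

Fixpoint sh_rev (s : seq bool) : seq bool -> hh :=
  match s with
  | [::] => fun t => wordC rat (rev t)
  | u :: s' => fix F (t : seq bool) : hh :=
      match t with
      | [::] => wordC rat (rev (u :: s'))
      | v :: t' => sh_rev s' t * wordC rat [:: u] + F t' * wordC rat [:: v]
      end
  end.
Definition sh (p q : hh) : hh :=
  bilin (fun w w' => sh_rev (rev w) (rev w')) p q.

(* Main.v *)
Require Import Defs.
From HB Require Import structures.
From mathcomp Require Import all_boot all_order all_algebra.
From mathcomp Require Import finmap.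
From mathcomp.multinomials Require Import monalg.
From mathcomp Require Import zify.

Set Implicit Arguments.
Unset Strict Implicit.
Unset Printing Implicit Defensive.
Import GRing.Theory.
Local Open Scope ring_scope.


Section Gen.
Variables (K : choiceType) (G : zmodType) (T : zmodType).

Definition lsum (F : G -> K -> T) (p : {malg G[K]}) : T :=
  \sum_(k <- msupp p) F p@_k k.

Lemma lsumEw F (p : {malg G[K]}) (d : {fset K}) :
  (forall k, F 0 k = 0) -> (msupp p `<=` d)%fset ->
  lsum F p = \sum_(k <- d) F p@_k k.
Proof.
move=> F0 le; rewrite /lsum (big_fset_incl _ le) // => x _ /mcoeff_outdom ->.
exact: F0.
Qed.

Lemma lsumD F (p q : {malg G[K]}) :
  (forall k, F 0 k = 0) -> (forall a b k, F (a + b) k = F a k + F b k) ->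
  lsum F (p + q) = lsum F p + lsum F q.
Proof.
move=> F0 FD.
rewrite !(@lsumEw F _ (msupp p `|` msupp q)%fset) //.
- by rewrite -big_split /=; apply: eq_bigr => k _; rewrite mcoeffD FD.
- exact: fsubsetUr.
- exact: fsubsetUl.
- exact: msuppD_le.
Qed.

Lemma lsumU F c k : (forall k, F 0 k = 0) -> lsum F << c *g k >> = F c k.
Proof. by move=> F0; rewrite (@lsumEw F _ _ F0 msuppU_le) big_seq_fset1 mcoeffUU. Qed.

Lemma lsum_split F1 F2 (p : {malg G[K]}) :
  lsum (fun c k => F1 c k + F2 c k) p = lsum F1 p + lsum F2 p.
Proof. by rewrite /lsum big_split. Qed.

Lemma lsum_ext F1 F2 (p : {malg G[K]}) :
  (forall c k, F1 c k = F2 c k) -> lsum F1 p = lsum F2 p.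
Proof. by move=> h; apply: eq_bigr => k _; apply: h. Qed.

Lemma malg_ext (phi psi : {malg G[K]} -> T) :
  {morph phi : x y / x + y} -> {morph psi : x y / x + y} ->
  (forall c k, phi << c *g k >> = psi << c *g k >>) -> forall p, phi p = psi p.
Proof.
move=> hphi hpsi h p.
have phi0 : phi 0 = 0 by apply/(@addrI _ (phi 0)); rewrite -hphi !addr0.
have psi0 : psi 0 = 0 by apply/(@addrI _ (psi 0)); rewrite -hpsi !addr0.
rewrite (monalgE p) (big_morph _ hphi phi0) (big_morph _ hpsi psi0).
by apply: eq_bigr => k _; apply: h.
Qed.
End Gen.

Section Mono.
Variables (K : monomType) (R : ringType).

Lemma monoZ (c : R) (k : K) : << c *g k >> = c *: << k >>.
Proof.
apply/malgP => k'; rewrite mcoeffZ !mcoeffU.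
by case: eqP; rewrite ?mulr1 ?mulr0.
Qed.

Lemma scale_mono (c d : R) (k : K) : c *: << d *g k >> = << c * d *g k >>.
Proof. by apply/malgP => k'; rewrite mcoeffZ !mcoeffU mulrnAr. Qed.

Lemma mulUU (c d : R) (k1 k2 : K) :
  << c *g k1 >> * << d *g k2 >> = << c * d *g mmul k1 k2 >> :> {malg R[K]}.
Proof. by rewrite malgM_def fgmulUU. Qed.
End Mono.

Section ComMono.
Variables (K : monomType) (R : comRingType).

Lemma malg_scalerAr (c : R) (x y : {malg R[K]}) : x * (c *: y) = c *: (x * y).
Proof.
move: x; apply: malg_ext => [x1 x2|x1 x2|d k] /=.
- by rewrite mulrDl.
- by rewrite mulrDl scalerDr.
move: y; apply: malg_ext => [y1 y2|y1 y2|e k'] /=.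
- by rewrite scalerDr mulrDr.
- by rewrite mulrDr scalerDr.
by rewrite scale_mono !mulUU scale_mono mulrCA.
Qed.
End ComMono.

Section Words.
Variables (R : ringType) (L : choiceType).

Lemma fmmulW (s t : seq L) : mmul (FMonom s) (FMonom t) = FMonom (s ++ t).
Proof. by apply: val_inj => /=; rewrite fmM. Qed.

Lemma wordCM (s t : seq L) : wordC R s * wordC R t = wordC R (s ++ t).
Proof. by rewrite /wordC mulUU mulr1 fmmulW. Qed.

Lemma word1 : wordC R ([::] : seq L) = 1.
Proof.
rewrite -mpolyC1E /wordC; congr (<< _ *g _ >>).
by apply: val_inj => /=; rewrite fm1.
Qed.
End Words.

Section PMap.
Variables (R S : comRingType) (L L' : choiceType).
Variable h : R -> S.
Hypotheses (h0 : h 0 = 0) (hD : forall a b, h (a + b) = h a + h b)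
  (hM : forall a b, h (a * b) = h a * h b) (h1 : h 1 = 1).
Variable letter : L -> {malg S[{fmonom L'}]}.

Definition pmap (p : {malg R[{fmonom L}]}) : {malg S[{fmonom L'}]} :=
  lsum (fun c k => h c *: \prod_(i <- fmonom_val k) letter i) p.

Let F0 k : h 0 *: \prod_(i <- fmonom_val k) letter i = 0.
Proof. by rewrite h0 scale0r. Qed.

Lemma pmapD p q : pmap (p + q) = pmap p + pmap q.
Proof. by apply: lsumD => // a b k; rewrite hD scalerDl. Qed.

Lemma pmapU c k : pmap << c *g k >> = h c *: \prod_(i <- fmonom_val k) letter i.
Proof. exact: lsumU. Qed.

Lemma pmapW s : pmap (wordC R s) = \prod_(i <- s) letter i.
Proof. by rewrite /wordC pmapU h1 scale1r. Qed.

Lemma pmapZ c p : pmap (c *: p) = h c *: pmap p.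
Proof.
move: p; apply: malg_ext => [p1 p2|p1 p2|d k] /=.
- by rewrite scalerDr pmapD.
- by rewrite pmapD scalerDr.
by rewrite scale_mono !pmapU hM scalerA.
Qed.

Lemma pmapM p q : pmap (p * q) = pmap p * pmap q.
Proof.
move: p; apply: malg_ext => [p1 p2|p1 p2|c k] /=.
- by rewrite mulrDl pmapD.
- by rewrite pmapD mulrDl.
move: q; apply: malg_ext => [q1 q2|q1 q2|d k'] /=.
- by rewrite mulrDr pmapD.
- by rewrite pmapD mulrDr.
rewrite mulUU !pmapU hM -scalerA -scalerAl malg_scalerAr; congr (_ *: (_ *: _)).
by rewrite fmM big_cat.
Qed.
End PMap.

Section Bilin.
Variables (R : comRingType) (L : choiceType).
Variable f : seq L -> seq L -> {malg R[{fmonom L}]}.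

Lemma bilinE p q : bilin f p q =
  lsum (fun c k1 => lsum (fun d k2 => (c * d) *: f (fmonom_val k1) (fmonom_val k2)) q) p.
Proof. by []. Qed.

Lemma bilinU c d k1 k2 : bilin f << c *g k1 >> << d *g k2 >> = (c * d) *: f k1 k2.
Proof.
rewrite bilinE lsumU; first by rewrite lsumU // => k; rewrite mulr0 scale0r.
by move=> k; rewrite /lsum big1 // => k3 _; rewrite mul0r scale0r.
Qed.

Lemma bilinW s t : bilin f (wordC R s) (wordC R t) = f s t.
Proof. by rewrite /wordC bilinU mulr1 scale1r. Qed.

Lemma bilinDl p1 p2 q : bilin f (p1 + p2) q = bilin f p1 q + bilin f p2 q.
Proof.
rewrite !bilinE lsumD //.
- by move=> k; rewrite /lsum big1 // => k2 _; rewrite mul0r scale0r.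
move=> a b k; rewrite -lsum_split; apply: lsum_ext => c k2.
by rewrite mulrDl scalerDl.
Qed.

Lemma bilinDr p q1 q2 : bilin f p (q1 + q2) = bilin f p q1 + bilin f p q2.
Proof.
rewrite !bilinE -lsum_split; apply: lsum_ext => c k.
rewrite lsumD //; first by move=> k'; rewrite mulr0 scale0r.
by move=> a b k'; rewrite mulrDr scalerDl.
Qed.

Lemma bilinZl c p q : bilin f (c *: p) q = c *: bilin f p q.
Proof.
move: p; apply: malg_ext => [p1 p2|p1 p2|d k] /=.
- by rewrite scalerDr bilinDl.
- by rewrite bilinDl scalerDr.
move: q; apply: malg_ext => [q1 q2|q1 q2|e k'] /=.
- by rewrite bilinDr.
- by rewrite !bilinDr scalerDr.
by rewrite scale_mono !bilinU scalerA mulrA.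
Qed.

Lemma bilinZr c p q : bilin f p (c *: q) = c *: bilin f p q.
Proof.
move: p; apply: malg_ext => [p1 p2|p1 p2|d k] /=.
- by rewrite bilinDl.
- by rewrite !bilinDl scalerDr.
move: q; apply: malg_ext => [q1 q2|q1 q2|e k'] /=.
- by rewrite scalerDr bilinDr.
- by rewrite bilinDr scalerDr.
by rewrite scale_mono !bilinU scalerA mulrCA.
Qed.

Lemma bilin0l q : bilin f 0 q = 0.
Proof. by apply/(@addrI _ (bilin f 0 q)); rewrite -bilinDl !addr0. Qed.
Lemma bilin0r p : bilin f p 0 = 0.
Proof. by apply/(@addrI _ (bilin f p 0)); rewrite -bilinDr !addr0. Qed.
End Bilin.

Section Ext2.
Variables (R : comRingType) (L : choiceType) (T : lmodType R).
Local Notation M := {malg R[{fmonom L}]}.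

Lemma monoW (c : R) (k : {fmonom L}) : << c *g k >> = c *: wordC R (fmonom_val k).
Proof. by rewrite monoZ /wordC fmK. Qed.

Lemma malg_ext2 (Phi Psi : M -> M -> T) :
  (forall p1 p2 q, Phi (p1 + p2) q = Phi p1 q + Phi p2 q) ->
  (forall p q1 q2, Phi p (q1 + q2) = Phi p q1 + Phi p q2) ->
  (forall c p q, Phi (c *: p) q = c *: Phi p q) ->
  (forall c p q, Phi p (c *: q) = c *: Phi p q) ->
  (forall p1 p2 q, Psi (p1 + p2) q = Psi p1 q + Psi p2 q) ->
  (forall p q1 q2, Psi p (q1 + q2) = Psi p q1 + Psi p q2) ->
  (forall c p q, Psi (c *: p) q = c *: Psi p q) ->
  (forall c p q, Psi p (c *: q) = c *: Psi p q) ->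
  (forall s t, Phi (wordC R s) (wordC R t) = Psi (wordC R s) (wordC R t)) ->
  forall p q, Phi p q = Psi p q.
Proof.
move=> D1 D2 Z1 Z2 E1 E2 Y1 Y2 W p q.
move: p; apply: malg_ext => [p1 p2|p1 p2|c k] //=.
move: q; apply: malg_ext => [q1 q2|q1 q2|d k'] //=.
by rewrite !monoW Z1 Z2 Y1 Y2 W.
Qed.
End Ext2.

Lemma sh_hDl p1 p2 q : sh_h (p1 + p2) q = sh_h p1 q + sh_h p2 q. Proof. exact: bilinDl. Qed.
Lemma sh_hDr p q1 q2 : sh_h p (q1 + q2) = sh_h p q1 + sh_h p q2. Proof. exact: bilinDr. Qed.
Lemma sh_hZl c p q : sh_h (c *: p) q = c *: sh_h p q. Proof. exact: bilinZl. Qed.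
Lemma sh_hZr c p q : sh_h p (c *: q) = c *: sh_h p q. Proof. exact: bilinZr. Qed.
Lemma shDl p1 p2 q : sh (p1 + p2) q = sh p1 q + sh p2 q. Proof. exact: bilinDl. Qed.
Lemma shDr p q1 q2 : sh p (q1 + q2) = sh p q1 + sh p q2. Proof. exact: bilinDr. Qed.
Lemma shZl c p q : sh (c *: p) q = c *: sh p q. Proof. exact: bilinZl. Qed.
Lemma shZr c p q : sh p (c *: q) = c *: sh p q. Proof. exact: bilinZr. Qed.
Lemma harm_hDl p1 p2 q : harm_h (p1 + p2) q = harm_h p1 q + harm_h p2 q. Proof. exact: bilinDl. Qed.
Lemma harm_hDr p q1 q2 : harm_h p (q1 + q2) = harm_h p q1 + harm_h p q2. Proof. exact: bilinDr. Qed.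
Lemma harm_hZl c p q : harm_h (c *: p) q = c *: harm_h p q. Proof. exact: bilinZl. Qed.
Lemma harm_hZr c p q : harm_h p (c *: q) = c *: harm_h p q. Proof. exact: bilinZr. Qed.
Lemma harmDl p1 p2 q : harm (p1 + p2) q = harm p1 q + harm p2 q. Proof. exact: bilinDl. Qed.
Lemma harmDr p q1 q2 : harm p (q1 + q2) = harm p q1 + harm p q2. Proof. exact: bilinDr. Qed.
Lemma harmZl c p q : harm (c *: p) q = c *: harm p q. Proof. exact: bilinZl. Qed.
Lemma harmZr c p q : harm p (c *: q) = c *: harm p q. Proof. exact: bilinZr. Qed.

Lemma add3ACA (V : zmodType) (a1 b1 c1 a2 b2 c2 : V) :
  a1 + b1 + c1 + (a2 + b2 + c2) = (a1 + a2) + (b1 + b2) + (c1 + c2).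
Proof. by rewrite [LHS]addrACA [a1 + b1 + _]addrACA. Qed.

Ltac linsolve :=
  move=> *; do 3 rewrite ?mulrDl ?mulrDr ?sh_hDl ?sh_hDr ?shDl ?shDr ?harm_hDl ?harm_hDr
     ?harmDl ?harmDr ?scalerDr ?scalerDl;
  rewrite -?scalerAl ?malg_scalerAr ?sh_hZl ?sh_hZr ?shZl ?shZr ?harm_hZl ?harm_hZr
     ?harmZl ?harmZr -?scalerAl ?malg_scalerAr ?scalerA ?addrA;
  timeout 10 done.

Notation wb := (wordC CC [:: lb]).
Notation wa := (wordC CC [:: la]).
Notation wx := (wordC rat [:: lx]).
Notation wy := (wordC rat [:: ly]).

Lemma sh_h_rev_nil s : sh_h_rev s [::] = wordC CC (rev s).
Proof. by case: s. Qed.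

Lemma sh_h_rev_bl s t : sh_h_rev (lb :: s) t = sh_h_rev s t * wb.
Proof.
case: t => [|v t] /=; last by [].
by rewrite sh_h_rev_nil wordCM rev_cons cats1.
Qed.

Lemma sh_h_rev_br s t : sh_h_rev s (lb :: t) = sh_h_rev s t * wb.
Proof.
elim: s t => [|u s IH] t.
  by rewrite [LHS]/= [sh_h_rev [::] t]/= wordCM rev_cons cats1.
case: u; last by [].
by rewrite -/lb !sh_h_rev_bl IH.
Qed.

Lemma sh_h_rev_aa s t : sh_h_rev (la :: s) (la :: t) =
  (sh_h_rev (la :: s) t + sh_h_rev s (la :: t) + hbar *: sh_h_rev s t) * wa.
Proof. by []. Qed.

Lemma shW s t : sh_h (wordC CC s) (wordC CC t) = sh_h_rev (rev s) (rev t).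
Proof. by rewrite /sh_h bilinW. Qed.

Lemma sh_h_1l Q : sh_h 1 Q = Q.
Proof.
move: Q; apply: malg_ext => [q1 q2|q1 q2|d k] /=; rewrite ?sh_hDr //.
by rewrite monoW sh_hZr -(word1 CC bool) shW /= revK.
Qed.

Lemma sh_h_1r P : sh_h P 1 = P.
Proof.
move: P; apply: malg_ext => [q1 q2|q1 q2|d k] /=; rewrite ?sh_hDl //.
by rewrite monoW sh_hZl -(word1 CC bool) shW sh_h_rev_nil revK.
Qed.

Lemma sh_h_bl P Q : sh_h (P * wb) Q = sh_h P Q * wb.
Proof.
move: P Q; apply: malg_ext2; try by linsolve.
move=> s t; rewrite -[wordC _ s]/(wordC CC s) -[wordC _ t]/(wordC CC t).
by rewrite wordCM !shW cats1 rev_rcons sh_h_rev_bl.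
Qed.

Lemma sh_h_br P Q : sh_h P (Q * wb) = sh_h P Q * wb.
Proof.
move: P Q; apply: malg_ext2; try by linsolve.
move=> s t; rewrite -[wordC _ s]/(wordC CC s) -[wordC _ t]/(wordC CC t).
by rewrite wordCM !shW cats1 rev_rcons sh_h_rev_br.
Qed.

Lemma sh_h_aa P Q : sh_h (P * wa) (Q * wa) =
  (sh_h (P * wa) Q + sh_h P (Q * wa) + hbar *: sh_h P Q) * wa.
Proof.
move: P Q; apply: malg_ext2; [by linsolve..| | | | |].
- move=> p1 p2 q.
  by rewrite [(p1 + p2) * _]mulrDl !sh_hDl scalerDr -mulrDl add3ACA.
- move=> p q1 q2.
  by rewrite [(q1 + q2) * _]mulrDl !sh_hDr scalerDr -mulrDl add3ACA.
- move=> c p q.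
  by rewrite [RHS]scalerAl -[c *: p * _]scalerAl !sh_hZl !scalerDr !scalerA (mulrC c hbar).
- move=> c p q.
  by rewrite [RHS]scalerAl -[c *: q * _]scalerAl !sh_hZr !scalerDr !scalerA (mulrC c hbar).
move=> s t; rewrite -[wordC _ s]/(wordC CC s) -[wordC _ t]/(wordC CC t).
by rewrite !wordCM !shW !cats1 !rev_rcons sh_h_rev_aa.
Qed.




Section Lin.
Variables (R : comRingType) (L : choiceType).
Local Notation M := {malg R[{fmonom L}]}.

Definition linl (F : M -> M -> M) : Prop :=
  (forall p1 p2 q, F (p1 + p2) q = F p1 q + F p2 q) /\ (forall c p q, F (c *: p) q = c *: F p q).
Definition linr (F : M -> M -> M) : Prop :=
  (forall p q1 q2, F p (q1 + q2) = F p q1 + F p q2) /\ (forall c p q, F p (c *: q) = c *: F p q).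

Lemma linl_add F G : linl F -> linl G -> linl (fun p q => F p q + G p q).
Proof.
move=> [F1 F2] [G1 G2]; split=> [p1 p2 q|c p q]; first by rewrite F1 G1 addrACA.
by rewrite F2 G2 scalerDr.
Qed.
Lemma linr_add F G : linr F -> linr G -> linr (fun p q => F p q + G p q).
Proof.
move=> [F1 F2] [G1 G2]; split=> [p q1 q2|c p q]; first by rewrite F1 G1 addrACA.
by rewrite F2 G2 scalerDr.
Qed.
Lemma linl_mul F w : linl F -> linl (fun p q => F p q * w).
Proof. by move=> [F1 F2]; split=> *; rewrite ?F1 ?F2 ?mulrDl ?scalerAl. Qed.
Lemma linr_mul F w : linr F -> linr (fun p q => F p q * w).
Proof. by move=> [F1 F2]; split=> *; rewrite ?F1 ?F2 ?mulrDl ?scalerAl. Qed.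
Lemma linl_scale F k : linl F -> linl (fun p q => k *: F p q).
Proof.
move=> [F1 F2]; split=> *; first by rewrite F1 scalerDr.
by rewrite F2 !scalerA mulrC.
Qed.
Lemma linr_scale F k : linr F -> linr (fun p q => k *: F p q).
Proof.
move=> [F1 F2]; split=> *; first by rewrite F1 scalerDr.
by rewrite F2 !scalerA mulrC.
Qed.

Variable b : M -> M -> M.
Hypotheses (bDl : forall p1 p2 q, b (p1 + p2) q = b p1 q + b p2 q)
  (bDr : forall p q1 q2, b p (q1 + q2) = b p q1 + b p q2)
  (bZl : forall c p q, b (c *: p) q = c *: b p q)
  (bZr : forall c p q, b p (c *: q) = c *: b p q).

Lemma linl_b : linl b. Proof. by split. Qed.
Lemma linr_b : linr b. Proof. by split. Qed.
Lemma linl_bw w1 w2 : linl (fun p q => b (p * w1) (q * w2)).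
Proof. by split=> *; rewrite ?mulrDl ?bDl -?scalerAl ?bZl. Qed.
Lemma linr_bw w1 w2 : linr (fun p q => b (p * w1) (q * w2)).
Proof. by split=> *; rewrite ?mulrDl ?bDr -?scalerAl ?bZr. Qed.
Lemma linl_bl w : linl (fun p q => b (p * w) q).
Proof. by split=> *; rewrite ?mulrDl ?bDl -?scalerAl ?bZl. Qed.
Lemma linr_bl w : linr (fun p q => b (p * w) q).
Proof. by split=> *; rewrite ?bDr ?bZr. Qed.
Lemma linl_br w : linl (fun p q => b p (q * w)).
Proof. by split=> *; rewrite ?bDl ?bZl. Qed.
Lemma linr_br w : linr (fun p q => b p (q * w)).
Proof. by split=> *; rewrite ?mulrDl ?bDr -?scalerAl ?bZr. Qed.

End Lin.

Lemma ext2L (R : comRingType) (L : choiceType) (Phi Psi : {malg R[{fmonom L}]} -> _ -> _) :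
  linl Phi -> linr Phi -> linl Psi -> linr Psi ->
  (forall s t, Phi (wordC R s) (wordC R t) = Psi (wordC R s) (wordC R t)) ->
  forall p q, Phi p q = Psi p q.
Proof.
move=> [F1 F2] [F3 F4] [G1 G2] [G3 G4] W.
exact: malg_ext2.
Qed.

Lemma ext2_hh (Phi Psi : hh -> hh -> hh) :
  linl Phi -> linr Phi -> linl Psi -> linr Psi ->
  (forall s t, Phi (wordC rat s) (wordC rat t) = Psi (wordC rat s) (wordC rat t)) ->
  forall p q, Phi p q = Psi p q.
Proof. exact: ext2L. Qed.
Lemma ext2_h1 (Phi Psi : h1 -> h1 -> h1) :
  linl Phi -> linr Phi -> linl Psi -> linr Psi ->
  (forall s t, Phi (wordC rat s) (wordC rat t) = Psi (wordC rat s) (wordC rat t)) ->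
  forall p q, Phi p q = Psi p q.
Proof. exact: ext2L. Qed.
Lemma ext2_HA (Phi Psi : HA -> HA -> HA) :
  linl Phi -> linr Phi -> linl Psi -> linr Psi ->
  (forall s t, Phi (wordC CC s) (wordC CC t) = Psi (wordC CC s) (wordC CC t)) ->
  forall p q, Phi p q = Psi p q.
Proof. exact: ext2L. Qed.

Lemma sh_rev_nil s : sh_rev s [::] = wordC rat (rev s).
Proof. by case: s. Qed.

Lemma shW' s t : sh (wordC rat s) (wordC rat t) = sh_rev (rev s) (rev t).
Proof. by rewrite /sh bilinW. Qed.

Lemma sh_1l Q : sh 1 Q = Q.
Proof.
move: Q; apply: malg_ext => [q1 q2|q1 q2|d k] /=; rewrite ?shDr //.
by rewrite monoW shZr -(word1 rat bool) shW' /= revK.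
Qed.

Lemma sh_1r P : sh P 1 = P.
Proof.
move: P; apply: malg_ext => [q1 q2|q1 q2|d k] /=; rewrite ?shDl //.
by rewrite monoW shZl -(word1 rat bool) shW' sh_rev_nil revK.
Qed.

Lemma sh_ll (l1 l2 : bool) P Q : sh (P * wordC rat [:: l1]) (Q * wordC rat [:: l2]) =
  sh P (Q * wordC rat [:: l2]) * wordC rat [:: l1] + sh (P * wordC rat [:: l1]) Q * wordC rat [:: l2].
Proof.
move: P Q; apply: ext2_hh.
- exact: (linl_bw shDl shZl).
- exact: (linr_bw shDr shZr).
- apply: linl_add; apply: linl_mul; [exact: (linl_br shDl shZl)|exact: (linl_bl shDl shZl)].
- apply: linr_add; apply: linr_mul; [exact: (linr_br shDr shZr)|exact: (linr_bl shDr shZr)].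
move=> s t.
by rewrite !wordCM !shW' !cats1 !rev_rcons.
Qed.

Lemma harm_rev_nil s : harm_rev s [::] = wordC rat (rev s).
Proof. by case: s. Qed.

Lemma harmW s t : harm (wordC rat s) (wordC rat t) = harm_rev (rev s) (rev t).
Proof. by rewrite /harm bilinW. Qed.

Lemma harm_1l Q : harm 1 Q = Q.
Proof.
move: Q; apply: malg_ext => [q1 q2|q1 q2|d k] /=; rewrite ?harmDr //.
by rewrite monoW harmZr -(word1 rat nat) harmW /= revK.
Qed.

Lemma harm_1r P : harm P 1 = P.
Proof.
move: P; apply: malg_ext => [q1 q2|q1 q2|d k] /=; rewrite ?harmDl //.
by rewrite monoW harmZl -(word1 rat nat) harmW harm_rev_nil revK.
Qed.

Lemma harm_ll (u v : nat) P Q : harm (P * wordC rat [:: u]) (Q * wordC rat [:: v]) =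
  harm P (Q * wordC rat [:: v]) * wordC rat [:: u] + harm (P * wordC rat [:: u]) Q * wordC rat [:: v]
  + harm P Q * wordC rat [:: (u + v).+1].
Proof.
move: P Q; apply: ext2_h1.
- exact: (linl_bw harmDl harmZl).
- exact: (linr_bw harmDr harmZr).
- apply: linl_add; first apply: linl_add; apply: linl_mul;
    [exact: (linl_br harmDl harmZl)|exact: (linl_bl harmDl harmZl)|exact: (linl_b harmDl harmZl)].
- apply: linr_add; first apply: linr_add; apply: linr_mul;
    [exact: (linr_br harmDr harmZr)|exact: (linr_bl harmDr harmZr)|exact: (linr_b harmDr harmZr)].
move=> s t.
by rewrite !wordCM !harmW !cats1 !rev_rcons.
Qed.

Lemma harm_h_rev_nil s : harm_h_rev s [::] = wordC CC (rev s).
Proof. by case: s. Qed.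

Lemma harm_hW s t : harm_h (wordC CC s) (wordC CC t) = harm_h_rev (rev s) (rev t).
Proof. by rewrite /harm_h bilinW. Qed.

Lemma harm_h_1l Q : harm_h 1 Q = Q.
Proof.
move: Q; apply: malg_ext => [q1 q2|q1 q2|d k] /=; rewrite ?harm_hDr //.
by rewrite monoW harm_hZr -(word1 CC nat) harm_hW /= revK.
Qed.

Lemma harm_h_1r P : harm_h P 1 = P.
Proof.
move: P; apply: malg_ext => [q1 q2|q1 q2|d k] /=; rewrite ?harm_hDl //.
by rewrite monoW harm_hZl -(word1 CC nat) harm_hW harm_h_rev_nil revK.
Qed.

Lemma harm_h_ll (u v : nat) P Q : harm_h (P * wordC CC [:: u]) (Q * wordC CC [:: v]) =
  harm_h P (Q * wordC CC [:: v]) * wordC CC [:: u] + harm_h (P * wordC CC [:: u]) Q * wordC CC [:: v]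
  + harm_h P Q * circ_h u v.
Proof.
move: P Q; apply: ext2_HA.
- exact: (linl_bw harm_hDl harm_hZl).
- exact: (linr_bw harm_hDr harm_hZr).
- apply: linl_add; first apply: linl_add; apply: linl_mul;
    [exact: (linl_br harm_hDl harm_hZl)|exact: (linl_bl harm_hDl harm_hZl)|exact: (linl_b harm_hDl harm_hZl)].
- apply: linr_add; first apply: linr_add; apply: linr_mul;
    [exact: (linr_br harm_hDr harm_hZr)|exact: (linr_bl harm_hDr harm_hZr)|exact: (linr_b harm_hDr harm_hZr)].
move=> s t.
by rewrite !wordCM !harm_hW !cats1 !rev_rcons.
Qed.


Section AbsP1.
Variables (U V : pzRingType) (io : U -> V) (hU : U -> U -> U) (hV : V -> V -> V).
Hypotheses (ioD : forall p q, io (p + q) = io p + io q)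
  (ioM : forall p q, io (p * q) = io p * io q).

Lemma abs_step1 P Q wu wv cc lu lv lc :
  hU (P * wu) (Q * wv) = hU P (Q * wv) * wu + hU (P * wu) Q * wv + hU P Q * cc ->
  io wu = lu -> io wv = lv -> io cc = lc ->
  hV (io P * lu) (io Q * lv) =
     hV (io P) (io Q * lv) * lu + hV (io P * lu) (io Q) * lv + hV (io P) (io Q) * lc ->
  io (hU P (Q * wv)) = hV (io P) (io (Q * wv)) ->
  io (hU (P * wu) Q) = hV (io (P * wu)) (io Q) ->
  io (hU P Q) = hV (io P) (io Q) ->
  io (hU (P * wu) (Q * wv)) = hV (io (P * wu)) (io (Q * wv)).
Proof.
move=> R Lu Lv Lc R' e1 e2 e3.
by rewrite R !ioD !ioM e1 e2 e3 !ioM Lu Lv Lc R'.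
Qed.
End AbsP1.

Section Zero.
Variables (V : pzRingType) (h : V -> V -> V).
Hypotheses (h0l : forall q, h 0 q = 0) (h0r : forall p, h p 0 = 0).
Lemma zero_case_l X Y lv :
  h (X * 0) (Y * lv) = h X (Y * lv) * 0 + h (X * 0) Y * lv + h X Y * 0.
Proof. by rewrite !mulr0 !h0l mul0r !addr0. Qed.
Lemma zero_case_r X Y lu :
  h (X * lu) (Y * 0) = h X (Y * 0) * lu + h (X * lu) Y * 0 + h X Y * 0.
Proof. by rewrite !mulr0 !h0r mul0r !addr0. Qed.
End Zero.

Section Transfer.
Variables (R S : pzRingType) (U : lmodType R) (V : lmodType S) (f : R -> S).
Hypothesis fM : forall a b, f (a * b) = f a * f b.
Variables (io : U -> V) (hU : U -> U -> U) (hV : V -> V -> V).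
Hypotheses (ioD : forall p q, io (p + q) = io p + io q)
  (ioZ : forall c p, io (c *: p) = f c *: io p)
  (hUDl : forall p1 p2 q, hU (p1 + p2) q = hU p1 q + hU p2 q)
  (hUDr : forall p q1 q2, hU p (q1 + q2) = hU p q1 + hU p q2)
  (hUZl : forall c p q, hU (c *: p) q = c *: hU p q)
  (hUZr : forall c p q, hU p (c *: q) = c *: hU p q)
  (hVDl : forall p1 p2 q, hV (p1 + p2) q = hV p1 q + hV p2 q)
  (hVDr : forall p q1 q2, hV p (q1 + q2) = hV p q1 + hV p q2)
  (hVZl : forall c p q, hV (c *: p) q = c *: hV p q)
  (hVZr : forall c p q, hV p (c *: q) = c *: hV p q).

Lemma tr_addl p1 p2 q :
  io (hU (p1 + p2) q) = io (hU p1 q) + io (hU p2 q).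
Proof. by rewrite hUDl ioD. Qed.
Lemma tr_addl' p1 p2 q :
  hV (io (p1 + p2)) (io q) = hV (io p1) (io q) + hV (io p2) (io q).
Proof. by rewrite ioD hVDl. Qed.
Lemma tr_addr p q1 q2 :
  io (hU p (q1 + q2)) = io (hU p q1) + io (hU p q2).
Proof. by rewrite hUDr ioD. Qed.
Lemma tr_addr' p q1 q2 :
  hV (io p) (io (q1 + q2)) = hV (io p) (io q1) + hV (io p) (io q2).
Proof. by rewrite ioD hVDr. Qed.
Lemma tr_scale c d p q : io (hU p q) = hV (io p) (io q) ->
  io (hU (c *: p) (d *: q)) = hV (io (c *: p)) (io (d *: q)).
Proof. by move=> e; rewrite hUZl hUZr !ioZ hVZl hVZr e. Qed.
End Transfer.


Definition ev0 (c : CC) : rat := c.[0].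
Lemma ev0_0 : ev0 0 = 0. Proof. by rewrite /ev0 horner0. Qed.
Lemma ev0_D a b : ev0 (a + b) = ev0 a + ev0 b. Proof. by rewrite /ev0 hornerD. Qed.
Lemma ev0_M a b : ev0 (a * b) = ev0 a * ev0 b. Proof. by rewrite /ev0 hornerM. Qed.
Lemma ev0_1 : ev0 1 = 1. Proof. by rewrite /ev0 hornerC. Qed.
Lemma ev0_hbar : ev0 hbar = 0. Proof. by rewrite /ev0 /hbar hornerX. Qed.

Lemma iotaAE p : iotaA p = pmap ev0 iota_letter p. Proof. by []. Qed.
Lemma iotaD p q : iotaA (p + q) = iotaA p + iotaA q.
Proof. exact: (pmapD ev0_0 ev0_D iota_letter p q). Qed.
Lemma iotaZ c p : iotaA (c *: p) = ev0 c *: iotaA p.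
Proof. exact: (pmapZ ev0_0 ev0_D ev0_M iota_letter c p). Qed.
Lemma iotaM p q : iotaA (p * q) = iotaA p * iotaA q.
Proof. exact: (pmapM ev0_0 ev0_D ev0_M iota_letter p q). Qed.
Lemma iotaW s : iotaA (wordC CC s) = \prod_(i <- s) iota_letter i.
Proof. exact: (pmapW ev0_0 ev0_1 iota_letter s). Qed.
Lemma iota1 : iotaA 1 = 1.
Proof. by rewrite -(word1 CC nat) iotaW big_nil. Qed.
Lemma iotaL u : iotaA (wordC CC [:: u]) = iota_letter u.
Proof. by rewrite iotaW big_seq1. Qed.

Lemma embAE p : embA p = pmap (fun c => c) embA_letter p. Proof. by []. Qed.
Lemma embD p q : embA (p + q) = embA p + embA q.
Proof. exact: (@pmapD _ _ _ _ (fun c => c) (erefl _) (fun _ _ => erefl _) embA_letter p q). Qed.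
Lemma embZ c p : embA (c *: p) = c *: embA p.
Proof. exact: (@pmapZ _ _ _ _ (fun c => c) (erefl _) (fun _ _ => erefl _) (fun _ _ => erefl _) embA_letter c p). Qed.
Lemma embM p q : embA (p * q) = embA p * embA q.
Proof. exact: (@pmapM _ _ _ _ (fun c => c) (erefl _) (fun _ _ => erefl _) (fun _ _ => erefl _) embA_letter p q). Qed.
Lemma embW s : embA (wordC CC s) = \prod_(i <- s) embA_letter i.
Proof. exact: (@pmapW _ _ _ _ (fun c => c) (erefl _) (erefl _) embA_letter s). Qed.

Lemma emb1E p : emb1 p = pmap (fun c => c) emb1_letter p. Proof. by []. Qed.
Lemma emb1D p q : emb1 (p + q) = emb1 p + emb1 q.
Proof. exact: (@pmapD _ _ _ _ (fun c => c) (erefl _) (fun _ _ => erefl _) emb1_letter p q). Qed.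
Lemma emb1Z c p : emb1 (c *: p) = c *: emb1 p.
Proof. exact: (@pmapZ _ _ _ _ (fun c => c) (erefl _) (fun _ _ => erefl _) (fun _ _ => erefl _) emb1_letter c p). Qed.
Lemma emb1M p q : emb1 (p * q) = emb1 p * emb1 q.
Proof. exact: (@pmapM _ _ _ _ (fun c => c) (erefl _) (fun _ _ => erefl _) (fun _ _ => erefl _) emb1_letter p q). Qed.
Lemma emb1W s : emb1 (wordC rat s) = \prod_(i <- s) emb1_letter i.
Proof. exact: (@pmapW _ _ _ _ (fun c => c) (erefl _) (erefl _) emb1_letter s). Qed.

Lemma harm0l q : harm 0 q = 0. Proof. exact: bilin0l. Qed.
Lemma harm0r p : harm p 0 = 0. Proof. exact: bilin0r. Qed.

Lemma iota_circ u v : iotaA (circ_h u v) =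
  if (u == 0%N) || (v == 0%N) then 0 else iota_letter (u + v).
Proof.
rewrite /circ_h; case: ifP => _; last exact: iotaL.
by rewrite iotaZ ev0_hbar scale0r.
Qed.

Lemma harm_letters u v X Y :
  harm (X * iota_letter u) (Y * iota_letter v) =
  harm X (Y * iota_letter v) * iota_letter u + harm (X * iota_letter u) Y * iota_letter v
  + harm X Y * (if (u == 0%N) || (v == 0%N) then 0 else iota_letter (u + v)).
Proof.
case: u => [|u]; first exact: (zero_case_l harm0l).
case: v => [|v]; first exact: (zero_case_r harm0r).
have H := harm_ll u v X Y; rewrite -addnS in H; exact: H.
Qed.

Lemma part1_words n s t : (size s + size t <= n)%N ->
  iotaA (harm_h (wordC CC s) (wordC CC t)) = harm (iotaA (wordC CC s)) (iotaA (wordC CC t)).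
Proof.
elim: n s t => [|n IH] s t.
  by case: s; case: t => //= _; rewrite word1 harm_h_1l iota1 harm_1l.
case/lastP: s => [|s' u] hn.
  by rewrite word1 harm_h_1l iota1 harm_1l.
case/lastP: t hn => [|t' v] hn.
  by rewrite word1 harm_h_1r iota1 harm_1r.
move: hn; rewrite !size_rcons addSn addnS ltnS => hn.
rewrite -!cats1 -!wordCM.
apply: (abs_step1 iotaD iotaM (harm_h_ll _ _ _ _) (iotaL u) (iotaL v) (iota_circ u v)
   (harm_letters u v _ _)); rewrite ?wordCM; apply: IH.
- by rewrite size_cat addn1 addnS.
- by rewrite size_cat addn1; apply: leq_trans hn; rewrite addSn.
- by apply: leq_trans hn; rewrite leqW.
Qed.

Lemma part1 w w' : iotaA (harm_h w w') = harm (iotaA w) (iotaA w').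
Proof.
move: w; apply: malg_ext => [p1 p2|p1 p2|c k] /=.
- exact: (tr_addl iotaD harm_hDl).
- exact: (tr_addl' iotaD harmDl).
move: w'; apply: malg_ext => [q1 q2|q1 q2|d k'] /=.
- exact: (tr_addr iotaD harm_hDr).
- exact: (tr_addr' iotaD harmDr).
rewrite !monoW.
apply: (tr_scale iotaZ harm_hZl harm_hZr harmZl harmZr).
exact: (part1_words (leqnn _)).
Qed.


Section AbsSh.
Variables (R : comNzRingType) (M : lalgType R).
Hypothesis scAr : forall (c : R) (x y : M), x * (c *: y) = c *: (x * y).
Variables (sh : M -> M -> M) (a b : M) (hb : R).
Hypotheses (shDl : forall p1 p2 q, sh (p1 + p2) q = sh p1 q + sh p2 q)
  (shDr : forall p q1 q2, sh p (q1 + q2) = sh p q1 + sh p q2)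
  (shZl : forall c p q, sh (c *: p) q = c *: sh p q)
  (shZr : forall c p q, sh p (c *: q) = c *: sh p q)
  (sh1l : forall Q, sh 1 Q = Q) (sh1r : forall P, sh P 1 = P)
  (shbl : forall P Q, sh (P * b) Q = sh P Q * b)
  (shbr : forall P Q, sh P (Q * b) = sh P Q * b)
  (shaa : forall P Q, sh (P * a) (Q * a) =
     (sh (P * a) Q + sh P (Q * a) + hb *: sh P Q) * a).

Definition Lt (i : nat) : M := if i == 0%N then hb *: b else b * a ^+ i.
Definition Et (s : seq nat) : M := \prod_(i <- s) Lt i.

Lemma Et_rcons s i : Et (rcons s i) = Et s * Lt i.
Proof. by rewrite /Et big_rcons. Qed.
Lemma Et_nil : Et [::] = 1.
Proof. by rewrite /Et big_nil. Qed.

Lemma sh_L0l P Q : sh (P * Lt 0) Q = sh P Q * Lt 0.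
Proof. by rewrite /Lt /= !scAr shZl shbl. Qed.
Lemma sh_L0r P Q : sh P (Q * Lt 0) = sh P Q * Lt 0.
Proof. by rewrite /Lt /= !scAr shZr shbr. Qed.

Section Im.
Variable Im : M -> Prop.
Hypotheses (Im1 : Im 1) (ImD : forall x y, Im x -> Im y -> Im (x + y))
  (ImZ : forall c x, Im x -> Im (c *: x)) (ImL : forall i x, Im x -> Im (x * Lt i)).

Lemma Im_Et s : Im (Et s).
Proof.
elim/last_ind: s => [|s i IH]; first by rewrite Et_nil.
by rewrite Et_rcons; apply: ImL.
Qed.

Lemma Im_sh_n n : forall s t, (size s + size t <= n)%N -> Im (sh (Et s) (Et t)).
Proof.
elim: n => [|n IH] s t.
  by case: s; case: t => // _; rewrite Et_nil sh1l.
case/lastP: s => [|s' i] hn; first by rewrite Et_nil sh1l; apply: Im_Et.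
case/lastP: t hn => [|t' j] hn; first by rewrite Et_nil sh1r; apply: Im_Et.
move: hn; rewrite !size_rcons addSn addnS ltnS => hn.
have IH1 k : Im (sh (Et (rcons s' k)) (Et t')).
  by apply: IH; rewrite size_rcons addSn; apply: leq_trans hn.
have IH2 l : Im (sh (Et s') (Et (rcons t' l))).
  by apply: IH; rewrite size_rcons addnS; apply: leq_trans hn.
have IH3 : Im (sh (Et s') (Et t')).
  by apply: IH; apply: leq_trans hn; apply: leqW.
rewrite !Et_rcons.
case: i => [|i'].
  rewrite sh_L0l; apply: ImL; rewrite -Et_rcons; exact: IH2.
case: j => [|j'].
  rewrite sh_L0r; apply: ImL; rewrite -Et_rcons; exact: IH1.
set X := Et s'; set Y := Et t'.
pose S k l := sh (X * b * a ^+ k) (Y * b * a ^+ l).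
have HSa k l : S k.+1 l.+1 = (S k.+1 l + S k l.+1 + hb *: S k l) * a.
  by rewrite /S !exprSr !mulrA shaa.
have HS : forall N k l m, (k + l <= N)%N ->
    ((0 < m)%N && ((0 < k)%N || (0 < l)%N)) || ((0 < k)%N && (0 < l)%N) ->
    Im (S k l * a ^+ m).
  elim=> [|N IHN] k l m.
    by rewrite leqn0 addn_eq0 => /andP[/eqP-> /eqP->]; rewrite andbF.
  case: k => [|k]; case: l => [|l] hkl /= hc.
  - by rewrite andbF in hc.
  -
    move: hc; rewrite orbF andbT => hm.
    rewrite /S expr0 mulr1 shbl -[_ * b * a ^+ m]mulrA.
    have -> : b * a ^+ m = Lt m by rewrite /Lt; case: m hm.
    apply: ImL; rewrite -mulrA -[b * _]/(Lt l.+1) -Et_rcons; exact: IH2.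
  - move: hc; rewrite orbF andbT => hm.
    rewrite /S expr0 mulr1 shbr -[_ * b * a ^+ m]mulrA.
    have -> : b * a ^+ m = Lt m by rewrite /Lt; case: m hm.
    apply: ImL; rewrite -mulrA -[b * _]/(Lt k.+1) -Et_rcons; exact: IH1.
  rewrite HSa -mulrA -exprS !mulrDl -!scalerAl.
  apply: ImD; first apply: ImD.
  - by apply: IHN; [move: hkl; rewrite addnS ltnS | ].
  - by apply: IHN; [move: hkl; rewrite addSn ltnS | rewrite orbT].
  case: k hkl {hc} => [|k]; case: l => [|l] hkl.
  - rewrite /S !expr0 !mulr1 shbl shbr -!mulrA.
    have -> : hb *: (sh X Y * (b * (b * a ^+ m.+1))) =
      sh X Y * Lt 0 * Lt m.+1 by rewrite /Lt /= scAr -scalerAl -!mulrA.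
    by do 2 apply: ImL.
  - by apply: ImZ; apply: IHN => //; lia.
  - by apply: ImZ; apply: IHN => //; lia.
  - by apply: ImZ; apply: IHN => //; lia.
have := HS (i'.+1 + j'.+1)%N i'.+1 j'.+1 0%N (leqnn _) isT.
by rewrite /S expr0 mulr1 !mulrA.
Qed.

End Im.
Section Th.
Variables (S : comNzRingType) (N : lalgType S) (ev : R -> S) (th : M -> N)
  (sh' : N -> N -> N) (Xl : bool -> N).
Hypotheses (thD : forall x y, th (x + y) = th x + th y)
  (thZ : forall c x, th (c *: x) = ev c *: th x)
  (ev_hb : ev hb = 0) (th1 : th 1 = 1)
  (thb : forall P, th (P * b) = 0)
  (thaa : forall P, th (P * a * a) = th (P * a) * Xl false)
  (thba : forall P, th (P * b * a) = th P * Xl true)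
  (sh'Dl : forall p1 p2 q, sh' (p1 + p2) q = sh' p1 q + sh' p2 q)
  (sh'Dr : forall p q1 q2, sh' p (q1 + q2) = sh' p q1 + sh' p q2)
  (sh'1l : forall Q, sh' 1 Q = Q) (sh'1r : forall P, sh' P 1 = P)
  (sh'll : forall l1 l2 P Q, sh' (P * Xl l1) (Q * Xl l2) =
      sh' P (Q * Xl l2) * Xl l1 + sh' (P * Xl l1) Q * Xl l2).

Lemma sh'0l Q : sh' 0 Q = 0.
Proof. by apply/(@addrI _ (sh' 0 Q)); rewrite -sh'Dl !addr0. Qed.
Lemma sh'0r P : sh' P 0 = 0.
Proof. by apply/(@addrI _ (sh' P 0)); rewrite -sh'Dr !addr0. Qed.

Lemma thL0 P : th (P * Lt 0) = 0.
Proof. by rewrite /Lt /= scAr thZ ev_hb scale0r. Qed.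

Definition pre Z l := if l == 0%N then th Z else th (Z * b * a ^+ l).

Lemma thP Z l : th (Z * b * a ^+ l.+1) = pre Z l * Xl (l == 0%N).
Proof.
case: l => [|l]; first by rewrite expr1 thba.
by rewrite /pre /= !exprSr !mulrA thaa.
Qed.

Definition Lh (i : nat) : N := if i is k.+1 then Xl true * Xl false ^+ k else 0.

Lemma thLt Z i : th (Z * Lt i) = th Z * Lh i.
Proof.
case: i => [|i]; first by rewrite thL0 mulr0.
rewrite /Lt /= mulrA.
elim: i => [|i IH]; first by rewrite expr1 thba expr0 mulr1.
by rewrite thP /pre /= IH -!mulrA -exprSr.
Qed.

Lemma th_Et s : th (Et s) = \prod_(i <- s) Lh i.
Proof.
elim/last_ind: s => [|s i IH]; first by rewrite Et_nil th1 /Et !big_nil.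
by rewrite Et_rcons thLt IH big_rcons.
Qed.

Lemma th_sh_n n : forall s t, (size s + size t <= n)%N ->
  th (sh (Et s) (Et t)) = sh' (th (Et s)) (th (Et t)).
Proof.
elim: n => [|n IH] s t.
  by case: s; case: t => // _; rewrite Et_nil sh1l th1 sh'1l.
case/lastP: s => [|s' i] hn; first by rewrite Et_nil sh1l th1 sh'1l.
case/lastP: t hn => [|t' j] hn; first by rewrite Et_nil sh1r th1 sh'1r.
move: hn; rewrite !size_rcons addSn addnS ltnS => hn.
have IH1 k : th (sh (Et (rcons s' k)) (Et t')) = sh' (th (Et (rcons s' k))) (th (Et t')).
  by apply: IH; rewrite size_rcons addSn; apply: leq_trans hn.
have IH2 l : th (sh (Et s') (Et (rcons t' l))) = sh' (th (Et s')) (th (Et (rcons t' l))).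
  by apply: IH; rewrite size_rcons addnS; apply: leq_trans hn.
rewrite !Et_rcons.
case: i => [|i'].
  by rewrite sh_L0l !thL0 sh'0l.
case: j => [|j'].
  by rewrite sh_L0r !thL0 sh'0r.
set X := Et s'; set Y := Et t'.
pose Sk k l := sh (X * b * a ^+ k) (Y * b * a ^+ l).
have HSa k l : Sk k.+1 l.+1 = (Sk k.+1 l + Sk k l.+1 + hb *: Sk k l) * a.
  by rewrite /Sk !exprSr !mulrA shaa.
have E1 k : th (sh (X * b * a ^+ k.+1) Y) = sh' (th (X * b * a ^+ k.+1)) (th Y).
  by have := IH1 k.+1; rewrite Et_rcons /Lt /= !mulrA.
have E2 l : th (sh X (Y * b * a ^+ l.+1)) = sh' (th X) (th (Y * b * a ^+ l.+1)).
  by have := IH2 l.+1; rewrite Et_rcons /Lt /= !mulrA.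
have T : forall Nn k l, (k + l <= Nn)%N ->
    th (Sk k.+1 l.+1) = sh' (th (X * b * a ^+ k.+1)) (th (Y * b * a ^+ l.+1)).
  elim=> [|Nn IHN] k l hkl.
    move: hkl; rewrite leqn0 addn_eq0 => /andP[/eqP-> /eqP->].
    rewrite HSa !mulrDl !thD -scalerAl thZ ev_hb scale0r addr0.
    rewrite /Sk !expr0 !mulr1 shbr shbl !thba E1 E2.
    by rewrite !(thP _ 0) /pre /= sh'll addrC.
  rewrite HSa !mulrDl !thD -scalerAl thZ ev_hb scale0r addr0.
  have A : th (Sk k.+1 l * a) = sh' (th (X * b * a ^+ k.+1)) (pre Y l) * Xl (l == 0%N).
    case: l hkl => [|l] hkl.
      by rewrite /Sk expr0 mulr1 shbr thba E1.
    by rewrite HSa thaa -HSa IHN //; lia.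
  have B : th (Sk k l.+1 * a) = sh' (pre X k) (th (Y * b * a ^+ l.+1)) * Xl (k == 0%N).
    case: k hkl {A} => [|k] hkl.
      by rewrite /Sk expr0 mulr1 shbl thba E2.
    by rewrite HSa thaa -HSa IHN //; lia.
  by rewrite A B (thP X k) (thP Y l) sh'll addrC.
rewrite /Lt /= !mulrA.
exact: (T _ i' j' (leqnn _)).
Qed.
End Th.
End AbsSh.


Section Agree.
Variables (U V : zmodType) (f g : U -> V).
Hypotheses (fD : forall p q, f (p + q) = f p + f q) (gD : forall p q, g (p + q) = g p + g q).
Lemma agree0 : f 0 = g 0.
Proof.
have f0 : f 0 = 0 by apply/(@addrI _ (f 0)); rewrite -fD !addr0.
have g0 : g 0 = 0 by apply/(@addrI _ (g 0)); rewrite -gD !addr0.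
by rewrite f0 g0.
Qed.
Lemma agreeD p q : f p = g p -> f q = g q -> f (p + q) = g (p + q).
Proof. by rewrite fD gD => -> ->. Qed.
End Agree.

Section Closure.
Variables (R : pzRingType) (U M : lmodType R) (e : U -> M) (hM : M -> M -> M).
Hypotheses (eD : forall p q, e (p + q) = e p + e q) (eZ : forall c p, e (c *: p) = c *: e p)
  (hMDl : forall p1 p2 q, hM (p1 + p2) q = hM p1 q + hM p2 q)
  (hMDr : forall p q1 q2, hM p (q1 + q2) = hM p q1 + hM p q2)
  (hMZl : forall c p q, hM (c *: p) q = c *: hM p q)
  (hMZr : forall c p q, hM p (c *: q) = c *: hM p q).

Let e0 : e 0 = 0. Proof. by apply/(@addrI _ (e 0)); rewrite -eD !addr0. Qed.
Let h0l q : hM 0 q = 0. Proof. by apply/(@addrI _ (hM 0 q)); rewrite -hMDl !addr0. Qed.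
Let h0r p : hM p 0 = 0. Proof. by apply/(@addrI _ (hM p 0)); rewrite -hMDr !addr0. Qed.

Lemma cl0l q : exists W, e W = hM (e 0) q.
Proof. by exists 0; rewrite e0 h0l. Qed.
Lemma cl0r p : exists W, e W = hM p (e 0).
Proof. by exists 0; rewrite e0 h0r. Qed.
Lemma cl_addl p1 p2 q : (exists W, e W = hM (e p1) q) -> (exists W, e W = hM (e p2) q) ->
  exists W, e W = hM (e (p1 + p2)) q.
Proof. by move=> [W1 e1] [W2 e2]; exists (W1 + W2); rewrite !eD hMDl e1 e2. Qed.
Lemma cl_addr p q1 q2 : (exists W, e W = hM p (e q1)) -> (exists W, e W = hM p (e q2)) ->
  exists W, e W = hM p (e (q1 + q2)).
Proof. by move=> [W1 e1] [W2 e2]; exists (W1 + W2); rewrite !eD hMDr e1 e2. Qed.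
Lemma cl_scale c d p q : (exists W, e W = hM (e p) (e q)) ->
  exists W, e W = hM (e (c *: p)) (e (d *: q)).
Proof. by move=> [W e1]; exists (c *: (d *: W)); rewrite !eZ e1 hMZl hMZr. Qed.
End Closure.

Section Comp.
Variables (R S : pzRingType) (U M : lmodType R) (V : lmodType S) (f : R -> S).
Variables (e : U -> M) (io : M -> V) (hM : M -> M -> M) (hV : V -> V -> V).
Hypotheses (eD : forall p q, e (p + q) = e p + e q) (eZ : forall c p, e (c *: p) = c *: e p)
  (ioD : forall p q, io (p + q) = io p + io q)
  (ioZ : forall c p, io (c *: p) = f c *: io p)
  (hMDl : forall p1 p2 q, hM (p1 + p2) q = hM p1 q + hM p2 q)
  (hMDr : forall p q1 q2, hM p (q1 + q2) = hM p q1 + hM p q2)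
  (hMZl : forall c p q, hM (c *: p) q = c *: hM p q)
  (hMZr : forall c p q, hM p (c *: q) = c *: hM p q)
  (hVDl : forall p1 p2 q, hV (p1 + p2) q = hV p1 q + hV p2 q)
  (hVDr : forall p q1 q2, hV p (q1 + q2) = hV p q1 + hV p q2)
  (hVZl : forall c p q, hV (c *: p) q = c *: hV p q)
  (hVZr : forall c p q, hV p (c *: q) = c *: hV p q).

Definition cgood p q := io (hM (e p) (e q)) = hV (io (e p)) (io (e q)).

Let e0 : e 0 = 0. Proof. by apply/(@addrI _ (e 0)); rewrite -eD !addr0. Qed.
Let io0 : io 0 = 0. Proof. by apply/(@addrI _ (io 0)); rewrite -ioD !addr0. Qed.
Let h0l q : hM 0 q = 0. Proof. by apply/(@addrI _ (hM 0 q)); rewrite -hMDl !addr0. Qed.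
Let h0r p : hM p 0 = 0. Proof. by apply/(@addrI _ (hM p 0)); rewrite -hMDr !addr0. Qed.
Let v0l q : hV 0 q = 0. Proof. by apply/(@addrI _ (hV 0 q)); rewrite -hVDl !addr0. Qed.
Let v0r p : hV p 0 = 0. Proof. by apply/(@addrI _ (hV p 0)); rewrite -hVDr !addr0. Qed.

Lemma cg0l q : cgood 0 q.
Proof. by rewrite /cgood e0 h0l io0 v0l. Qed.
Lemma cg0r p : cgood p 0.
Proof. by rewrite /cgood e0 h0r io0 v0r. Qed.
Lemma cg_addl p1 p2 q : cgood p1 q -> cgood p2 q -> cgood (p1 + p2) q.
Proof. by rewrite /cgood => e1 e2; rewrite eD hMDl ioD e1 e2 ioD hVDl. Qed.
Lemma cg_addr p q1 q2 : cgood p q1 -> cgood p q2 -> cgood p (q1 + q2).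
Proof. by rewrite /cgood => e1 e2; rewrite eD hMDr ioD e1 e2 ioD hVDr. Qed.
Lemma cg_scale c d p q : cgood p q -> cgood (c *: p) (d *: q).
Proof. by rewrite /cgood => e1; rewrite !eZ hMZl hMZr !ioZ hVZl hVZr e1. Qed.
End Comp.


Fixpoint psirev (s : seq bool) : hh :=
  match s with
  | [::] => 1
  | true :: _ => 0
  | false :: s' =>
      match s' with
      | [::] => 0
      | false :: _ => psirev s' * wx
      | true :: s'' => psirev s'' * wy
      end
  end.

Definition theta (P : HH) : hh :=
  lsum (fun c k => ev0 c *: psirev (rev (fmonom_val k))) P.

Lemma thD P Q : theta (P + Q) = theta P + theta Q.
Proof.
apply: lsumD => [k|x y k]; first by rewrite ev0_0 scale0r.
by rewrite ev0_D scalerDl.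
Qed.

Lemma thW c s : theta << c *g FMonom s >> = ev0 c *: psirev (rev s).
Proof. by rewrite /theta lsumU // => k; rewrite ev0_0 scale0r. Qed.

Lemma thZ c P : theta (c *: P) = ev0 c *: theta P.
Proof.
move: P; apply: malg_ext => [p1 p2|p1 p2|d k] /=.
- by rewrite scalerDr thD.
- by rewrite thD scalerDr.
by rewrite scale_mono -(fmK k) !thW ev0_M scalerA.
Qed.

Lemma th1 : theta 1 = 1.
Proof. by rewrite -(word1 CC bool) /wordC thW ev0_1 scale1r. Qed.

Lemma monoWM (R : ringType) (L : choiceType) (c : R) (k : {fmonom L}) t :
  << c *g k >> * wordC R t = << c *g FMonom (fmonom_val k ++ t) >>.
Proof. by rewrite /wordC mulUU mulr1; congr (<< _ *g _ >>); apply: val_inj => /=; rewrite fmM. Qed.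

Lemma thb P : theta (P * wb) = 0.
Proof.
move: P; apply: malg_ext => [p1 p2|p1 p2|c k] /=.
- by rewrite mulrDl thD.
- by rewrite addr0.
by rewrite monoWM thW cats1 rev_rcons scaler0.
Qed.

Lemma thaa P : theta (P * wa * wa) = theta (P * wa) * wx.
Proof.
move: P; apply: malg_ext => [p1 p2|p1 p2|c k] /=.
- by rewrite !mulrDl thD.
- by rewrite mulrDl thD mulrDl.
rewrite !monoWM !thW /= !cats1 !rev_rcons -scalerAl.
by [].
Qed.

Lemma thba P : theta (P * wb * wa) = theta P * wy.
Proof.
move: P; apply: malg_ext => [p1 p2|p1 p2|c k] /=.
- by rewrite !mulrDl thD.
- by rewrite thD mulrDl.
rewrite !monoWM -(fmK k) !thW /= !cats1 !rev_rcons -scalerAl.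
by [].
Qed.

Lemma wordC_cons (R : ringType) (L : choiceType) (x : L) s :
  wordC R (x :: s) = wordC R [:: x] * wordC R s.
Proof. by rewrite wordCM. Qed.

Lemma wordC_nseq (R : ringType) (L : choiceType) (x : L) n :
  wordC R (nseq n x) = wordC R [:: x] ^+ n.
Proof.
elim: n => [|n IH]; first by rewrite expr0 word1.
by rewrite exprS -IH wordCM.
Qed.

Lemma wordC_bn n : wordC CC (lb :: nseq n la) = wb * wa ^+ n.
Proof. by rewrite wordC_cons wordC_nseq. Qed.

Lemma embL i : embA_letter i = Lt wa wb hbar i.
Proof. case: i => [|i] //; exact: wordC_bn. Qed.

Lemma embE s : embA (wordC CC s) = Et wa wb hbar s.
Proof. by rewrite embW /Et; apply: eq_bigr => i _; exact: embL. Qed.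

Lemma emb_one : embA 1 = 1.
Proof. by rewrite -(word1 CC nat) embW big_nil. Qed.

Lemma malg_ind (K : choiceType) (G : zmodType) (P : {malg G[K]} -> Prop) :
  P 0 -> (forall p q, P p -> P q -> P (p + q)) -> (forall c k, P << c *g k >>) ->
  forall p, P p.
Proof.
move=> P0 PD PU p; rewrite (monalgE p).
by apply: big_ind => // k _; apply: PU.
Qed.

Lemma Im_words s t : exists W, embA W = sh_h (Et wa wb hbar s) (Et wa wb hbar t).
Proof.
apply: (Im_sh_n (@malg_scalerAr _ CC) sh_hZl sh_hZr sh_h_1l sh_h_1r sh_h_bl sh_h_br sh_h_aa
   (Im := fun X => exists W, embA W = X) _ _ _ _ (leqnn _)).
- by exists 1; rewrite emb_one.
- by move=> x y [W1 e1] [W2 e2]; exists (W1 + W2); rewrite embD e1 e2.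
- by move=> c x [W e1]; exists (c *: W); rewrite embZ e1.
- by move=> i x [W e1]; exists (W * wordC CC [:: i]); rewrite embM e1 embW big_seq1 embL.
Qed.

Lemma part2 w w' : exists W, embA W = sh_h (embA w) (embA w').
Proof.
move: w w'; apply: malg_ind => [w'|p1 p2 IH1 IH2 w'|c k w'].
- exact: (cl0l embD sh_hDl).
- exact: (cl_addl embD sh_hDl (IH1 w') (IH2 w')).
move: w'; apply: malg_ind => [|q1 q2 IH1 IH2|d k'].
- exact: (cl0r embD sh_hDr).
- exact: (cl_addr embD sh_hDr IH1 IH2).
rewrite !monoW; apply: (cl_scale embZ sh_hZl sh_hZr).
rewrite !embE; exact: Im_words.
Qed.

Lemma th_words s t : theta (sh_h (Et wa wb hbar s) (Et wa wb hbar t)) =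
  sh (theta (Et wa wb hbar s)) (theta (Et wa wb hbar t)).
Proof.
exact: (th_sh_n (@malg_scalerAr _ CC) sh_hZl sh_hZr sh_h_1l sh_h_1r sh_h_bl sh_h_br sh_h_aa
   (Xl := fun l => wordC rat [:: l]) thD thZ ev0_hbar th1 thaa thba shDl shDr sh_1l sh_1r
   sh_ll (leqnn _)).
Qed.

Lemma emb1_one : emb1 1 = 1.
Proof. by rewrite -(word1 rat nat) emb1W big_nil. Qed.
Lemma emb1_zero : emb1 0 = 0.
Proof. by apply/(@addrI _ (emb1 0)); rewrite -emb1D !addr0. Qed.

Lemma Lh_emb i : Lh (fun l => wordC rat [:: l]) i = emb1 (iota_letter i).
Proof.
case: i => [|i]; first by rewrite emb1_zero.
rewrite emb1W big_seq1 /emb1_letter wordC_cons wordC_nseq.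
by [].
Qed.

Lemma th_emb_words s : theta (embA (wordC CC s)) = emb1 (iotaA (wordC CC s)).
Proof.
rewrite embE (th_Et (@malg_scalerAr _ CC) (Xl := fun l => wordC rat [:: l]) thZ ev0_hbar th1 thaa thba).
rewrite iotaW (big_morph emb1 emb1M emb1_one).
by apply: eq_bigr => i _; exact: Lh_emb.
Qed.

Lemma th_emb W : theta (embA W) = emb1 (iotaA W).
Proof.
have fD p q : theta (embA (p + q)) = theta (embA p) + theta (embA q).
  exact: etrans (f_equal theta (embD p q)) (thD _ _).
have gD p q : emb1 (iotaA (p + q)) = emb1 (iotaA p) + emb1 (iotaA q).
  exact: etrans (f_equal emb1 (iotaD p q)) (emb1D _ _).
move: W; apply: malg_ind => [|p q|c k].
- exact: (agree0 fD gD).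
- exact: (agreeD fD gD).
by rewrite monoW embZ thZ iotaZ emb1Z th_emb_words.
Qed.

Lemma part3 w w' : theta (sh_h (embA w) (embA w')) = sh (theta (embA w)) (theta (embA w')).
Proof.
move: w w'; apply: malg_ind => [w'|p1 p2 IH1 IH2 w'|c k w'].
- exact: (cg0l embD thD sh_hDl shDl).
- exact: (cg_addl embD thD sh_hDl shDl (IH1 w') (IH2 w')).
move: w'; apply: malg_ind => [|q1 q2 IH1 IH2|d k'].
- exact: (cg0r embD thD sh_hDr shDr).
- exact: (cg_addr embD thD sh_hDr shDr IH1 IH2).
rewrite !monoW; apply: (cg_scale embZ thZ sh_hZl sh_hZr shZl shZr).
rewrite /cgood !embE; exact: th_words.
Qed.

Theorem proposition3p9 (w w' : HA) :
  iotaA (harm_h w w') = harm (iotaA w) (iotaA w') /\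
  (exists W : HA, embA W = sh_h (embA w) (embA w')) /\
  (forall W : HA, embA W = sh_h (embA w) (embA w') ->
     emb1 (iotaA W) = sh (emb1 (iotaA w)) (emb1 (iotaA w'))).
Proof.
split; first exact: part1.
split; first exact: part2.
move=> W eW.
exact: etrans (esym (th_emb W)) (etrans (f_equal theta eW)
  (etrans (part3 w w') (f_equal2 sh (th_emb w) (th_emb w')))).
Qed.
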